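(* Let $x\in W_n$ and $1\le k\le n-1$. Then $\ell(xs_k)>\ell(x)$ if and only if $\ell(txs_k)>\ell(tx)$.
   Context: $W_n$ is the Weyl group of type $B_n$ with Coxeter generators $t,s_1,\dots,s_{n-1}$ ($(ts_1)^4=1$, $(s_is_{i+1})^3=1$, other distinct pairs commute), and $\ell$ is its length function. *)

(* Defs.v *)
From mathcomp Require Import all_boot all_fingroup.
Set Implicit Arguments. Unset Strict Implicit. Unset Printing Implicit Defensive.

(* The Weyl group W_n of type B_n, realised as the group of signed
   permutations of {1..n}.  A point (i, e) : 'I_n * bool stands for the
   signed letter +(i+1) (e = false) or -(i+1) (e = true). *)
Definition pt (n : nat) := ('I_n * bool)%type.

Local Open Scope group_scope.

Definition negp n (a : 'I_n) : {perm pt n} := tperm (a, false) (a, true).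
Definition swapp n (a b : 'I_n) : {perm pt n} :=
  tperm (a, false) (b, false) * tperm (a, true) (b, true).

Definition tgen (n : nat) : {perm pt n} :=
  match @insub nat (fun i => i < n) 'I_n 0 with
  | Some a => negp a
  | None => 1
  end.

(* Coxeter generator s_k (1 <= k <= n-1) : swaps letters k and k+1,
   i.e. ordinals k-1 and k; identity outside the meaningful range. *)
Definition sgen (n k : nat) : {perm pt n} :=
  match @insub nat (fun i => i < n) 'I_n k.-1, @insub nat (fun i => i < n) 'I_n k with
  | Some a, Some b => if 0 < k then swapp a b else 1
  | _, _ => 1
  end.

Definition gen (n : nat) (i : 'I_n) : {perm pt n} :=
  if val i == 0 then tgen n else sgen n i.

Definition W (n : nat) : {set {perm pt n}} := <<[set gen i | i : 'I_n]>>.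

Definition word_of_length (n m : nat) (x : {perm pt n}) : bool :=
  [exists w : m.-tuple 'I_n, (\prod_(i <- w) gen i == x)].

(* Every x in W n has such a word of length < #|W n| <= #|{perm pt n}|,
   so the search range below is large enough (elements outside W n get
   a meaningless value, irrelevant here). *)
Definition ell (n : nat) (x : {perm pt n}) : nat :=
  find (fun m => word_of_length m x) (iota 0 #|{perm pt n}|.+1).

(* Main.v *)
Require Import Defs.
From mathcomp Require Import all_boot all_fingroup.
From mathcomp Require Import zify.

Module MA.
Set Implicit Arguments. Unset Strict Implicit. Unset Printing Implicit Defensive.
Local Open Scope group_scope.

Section S.
Variable n : nat.
Implicit Types (p q : pt n) (x y : {perm pt n}).

Definition key p : nat := if p.2 then n - (p.1).+1 else n + p.1.
Definition negpt p : pt n := (p.1, ~~ p.2).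

Lemma key_lt p : key p < n + n.
Proof. case: p => [[i hi] []] /=; rewrite /key /=; lia. Qed.

Lemma key_inj : injective key.
Proof.
move=> [[i hi] e] [[j hj] f]; rewrite /key /=.
case: e; case: f => /= h; try lia.
- by congr pair; apply: val_inj => /=; lia.
- by congr pair; apply: val_inj => /=; lia.
Qed.

Lemma key_neg p : key (negpt p) = n + n - (key p).+1.
Proof. case: p => [[i hi] []]; rewrite /key /=; lia. Qed.

Lemma tpermE' (a b c : pt n) : tperm a b c = if c == a then b else if c == b then a else c.
Proof. by case: tpermP => [->|->|/eqP/negbTE-> /eqP/negbTE->]; rewrite ?eqxx //; case: eqP. Qed.

End S.

End MA.
Import MA.
Module MB.
Import MA.
Set Implicit Arguments. Unset Strict Implicit. Unset Printing Implicit Defensive.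
Local Open Scope group_scope.

Ltac swcase := repeat match goal with |- context [if ?c then _ else _] =>
  lazymatch c with context [if _ then _ else _] => fail | _ =>
  match c with ?x == ?y => let h := fresh in case: (eqVneq x y) => h /= end end end.

Section S.
Variable n : nat.
Implicit Types (p q : pt n) (x y : {perm pt n}).

Definition sw (u i : nat) := if i == u then u.+1 else if i == u.+1 then u else i.

Lemma ptE (i j : 'I_n) (e f : bool) : ((i, e) == (j, f) :> pt n) = (i == j) && (e == f).
Proof. by []. Qed.

Lemma tgenE p : 0 < n -> tgen n p = if val p.1 == 0 then negpt p else p.
Proof.
move=> n0; rewrite /tgen; case: insubP => [a _ ha|]; last by rewrite n0.
rewrite /negp tpermE' /negpt; case: p => [i e] /=.
have hia : (i == a) = (val i == 0) by rewrite -ha; apply/eqP/eqP => [->|/val_inj].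
rewrite -hia; case: (eqVneq i a) => [->|ia]; case: e => //=;
  rewrite ?eqxx //=; rewrite -!pair_eqE /= ?(negbTE ia) //= ?eqxx //.
Qed.

Lemma sgenE k (a b : 'I_n) p : val a = k.-1 -> val b = k -> 0 < k ->
  sgen n k p = if p.1 == a then (b, p.2) else if p.1 == b then (a, p.2) else p.
Proof.
move=> ha hb k0; rewrite /sgen.
case: insubP => [a' _ ha'|]; last by rewrite -ha ltn_ord.
case: insubP => [b' _ hb'|]; last by rewrite -hb ltn_ord.
have -> : a' = a by apply: val_inj; rewrite ha ha'.
have -> : b' = b by apply: val_inj; rewrite hb hb'.
rewrite k0 /swapp permM !tpermE'.
have ab : a != b by apply/eqP => /(congr1 val); rewrite ha hb; lia.
have ba : b != a by rewrite eq_sym.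
case: p => [i e] /=; rewrite !ptE /=.
case: (eqVneq i a) => [->|ia]; last case: (eqVneq i b) => [->|ib];
 case: e; rewrite /= ?eqxx /= ?(negbTE ab) ?(negbTE ba) ?andbF //= ?ptE /= ?eqxx /= ?(negbTE ab) ?(negbTE ba) ?(negbTE ia) ?(negbTE ib) //.
Qed.


Lemma keyt p : 0 < n -> key (tgen n p) = sw n.-1 (key p).
Proof.
move=> n0; rewrite tgenE //; case: p => [[i hi] e] /=.
case: eqP => [i0|ni]; rewrite /sw /key /negpt /=; case: e => /=; swcase; lia.
Qed.

Lemma sign_t p : 0 < n -> (tgen n p).2 = if val p.1 == 0 then ~~ p.2 else p.2.
Proof. by move=> n0; rewrite tgenE //; case: ifP. Qed.

Lemma keys k (a b : 'I_n) p : val a = k.-1 -> val b = k -> 0 < k ->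
  key (sgen n k p) = sw (n + k.-1) (sw (n - k.+1) (key p)).
Proof.
move=> ha hb k0; rewrite (sgenE p ha hb k0); case: p => [[i hi] e] /=.
have kn : k < n by rewrite -hb ltn_ord.
have ha' : (a : nat) = k.-1 by []. have hb' : (b : nat) = k by [].
case: (eqVneq (Ordinal hi) a) => [ea|na]; last case: (eqVneq (Ordinal hi) b) => [eb|nb].
- have ia : i = k.-1 by rewrite -ha -ea.
  rewrite /sw /key /= ?ha' ?hb'; case: e => /=; swcase; lia.
- have ib : i = k by rewrite -hb -eb.
  rewrite /sw /key /= ?ha' ?hb'; case: e => /=; swcase; lia.
- have ia : i != k.-1 by apply: contra na => /eqP h; apply/eqP/val_inj; rewrite /= ha.
  have ib : i != k by apply: contra nb => /eqP h; apply/eqP/val_inj; rewrite /= hb.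
  move: ia ib => /eqP ia /eqP ib.
  rewrite /sw /key /= ?ha' ?hb'; case: e => /=; swcase; lia.
Qed.

Lemma sign_s k (a b : 'I_n) p : val a = k.-1 -> val b = k -> 0 < k ->
  (sgen n k p).2 = p.2.
Proof. by move=> ha hb k0; rewrite (sgenE p ha hb k0); case: ifP => //; case: ifP. Qed.

End S.

End MB.
Import MB.
Module MC.
Import MA.
Import MB.
Set Implicit Arguments. Unset Strict Implicit. Unset Printing Implicit Defensive.
Local Open Scope group_scope.

Ltac swcase := repeat match goal with |- context [if ?c then _ else _] =>
  lazymatch c with context [if _ then _ else _] => fail | _ =>
  match c with ?x == ?y => let h := fresh in case: (eqVneq x y) => h /= end end end.

Lemma sw_lt u i j : ~ (i = u /\ j = u.+1) -> ~ (i = u.+1 /\ j = u) ->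
  (sw u i < sw u j) = (i < j).
Proof. move=> h1 h2; rewrite /sw; swcase; apply/idP/idP; lia. Qed.

Section S.
Variable n : nat.
Implicit Types (p q : pt n) (x y : {perm pt n}).

Definition Iset (f : pt n -> nat) :=
  [set ab : pt n * pt n | (key ab.1 < key ab.2) && (f ab.2 < f ab.1)].

Lemma inv_swap (f g : pt n -> nat) u c d : injective f -> (forall p, g p = sw u (f p)) ->
  f c = u -> f d = u.+1 -> key c < key d ->
  Iset g = (c, d) |: Iset f /\ (c, d) \notin Iset f.
Proof.
move=> fi hg fc fd cd; split; last by rewrite inE /= fc fd; apply/negP => /andP[_]; lia.
apply/setP => -[a b]; rewrite in_setU1 !inE /= !hg.
have cdn : c != d by apply/eqP => cd'; move: cd; rewrite cd' ltnn.
have [/andP[/eqP fa /eqP fb]|nA] := boolP ((f a == u) && (f b == u.+1)).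
  have ac : a = c by apply: fi; rewrite fa fc.
  have bd : b = d by apply: fi; rewrite fb fd.
  rewrite ac bd eqxx cd fc fd /=; rewrite /sw; swcase; lia.
have [/andP[/eqP fa /eqP fb]|nB] := boolP ((f a == u.+1) && (f b == u)).
  have ad : a = d by apply: fi; rewrite fa fd.
  have bc : b = c by apply: fi; rewrite fb fc.
  rewrite ad bc; have -> : (key d < key c) = false by apply/negP; lia.
  by rewrite /= -pair_eqE /= eq_sym (negbTE cdn).
rewrite sw_lt; last 2 first.
- by case=> /eqP h1 /eqP h2; move: nB; rewrite h1 h2.
- by case=> /eqP h1 /eqP h2; move: nA; rewrite h1 h2.
have -> : ((a, b) == (c, d)) = false.
  by apply/negP => /eqP [ac bd]; move: nA; rewrite ac bd fc fd !eqxx.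
by [].
Qed.

End S.

Section L.
Variable n : nat.
Implicit Types (p q : pt n) (x y : {perm pt n}).

Definition Nset x := [set a : pt n | a.2 && ~~ (x a).2].
Definition L x := #|Iset (fun a => key (x a))| + #|Nset x|.
Definition nequiv x := forall p, x (negpt p) = negpt (x p).

Lemma sw_inj u : injective (sw u).
Proof. move=> i j; rewrite /sw; swcase; lia. Qed.

Lemma nequivV x : nequiv x -> nequiv x^-1.
Proof. by move=> ex q; apply: (@perm_inj _ x); rewrite ex !permKV. Qed.

Lemma negptK : involutive (@negpt n).
Proof. by case=> i e; rewrite /negpt /= negbK. Qed.

Lemma Ls x k (a b : 'I_n) : val a = k.-1 -> val b = k -> 0 < k -> nequiv x ->
  key (x^-1 (a, false)) < key (x^-1 (b, false)) ->
  L (x * sgen n k) = (L x).+2.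
Proof.
move=> ha hb k0 ex cond.
have kn : k < n by rewrite -hb ltn_ord.
have ha' : (a : nat) = k.-1 by []. have hb' : (b : nat) = k by [].
set f := fun p => key (x p).
set h := fun p => sw (n - k.+1) (f p).
have fi : injective f by move=> p q /key_inj /perm_inj.
have hi : injective h by move=> p q /sw_inj /fi.
have [E1 N1] : Iset h = (x^-1 (b, true), x^-1 (a, true)) |: Iset f /\
               (x^-1 (b, true), x^-1 (a, true)) \notin Iset f.
  apply: inv_swap => //.
  - by rewrite /f /= permKV /key /= hb'.
  - by rewrite /f /= permKV /key /= ha'; lia.
  - have -> : ((b, true) : pt n) = negpt (b, false) by [].
    have -> : ((a, true) : pt n) = negpt (a, false) by [].
    rewrite !(nequivV ex) !key_neg; move: cond; have := key_lt (x^-1 (a,false));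
    have := key_lt (x^-1 (b,false)); lia.
have [E2 N2] : Iset (fun p => key ((x * sgen n k) p)) =
      (x^-1 (a, false), x^-1 (b, false)) |: Iset h /\
      (x^-1 (a, false), x^-1 (b, false)) \notin Iset h.
  apply: (inv_swap (u := n + k.-1)) => //.
  - by move=> p; rewrite permM (keys _ ha hb k0).
  - by rewrite /h /f /= permKV /key /= ha' /sw; swcase; lia.
  - by rewrite /h /f /= permKV /key /= hb' /sw; swcase; lia.
have EN : Nset (x * sgen n k) = Nset x.
  by apply/setP => p; rewrite !inE permM (sign_s _ ha hb k0).
by rewrite /L EN E2 cardsU1 N2 E1 cardsU1 N1.
Qed.

Lemma Lt x (o : 'I_n) : val o = 0 -> nequiv x -> (x^-1 (o, false)).2 = false ->
  L (x * tgen n) = (L x).+2.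
Proof.
move=> ho ex cond.
have n0 : 0 < n by rewrite -ho ltn_ord.
have ho' : (o : nat) = 0 by [].
set d := x^-1 (o, false).
have xd : x d = (o, false) by rewrite permKV.
have cE : x^-1 (o, true) = negpt d.
  by rewrite -(nequivV ex).
set f := fun p => key (x p).
have fi : injective f by move=> p q /key_inj /perm_inj.
have [E1 N1] : Iset (fun p => key ((x * tgen n) p)) = (negpt d, d) |: Iset f /\
               (negpt d, d) \notin Iset f.
  apply: (inv_swap (u := n.-1)) => //.
  - by move=> p; rewrite permM keyt.
  - by rewrite /f /= -cE permKV /key /= ho'; lia.
  - by rewrite /f /= xd /key /= ho'; lia.
  - rewrite key_neg; have := key_lt d; move: cond; rewrite /key; case: (d.2) => //= _; lia.
have EN : Nset (x * tgen n) = negpt d |: Nset x.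
  apply/setP => p; rewrite in_setU1 !inE permM sign_t //.
  case: (eqVneq p (negpt d)) => [->|pd] /=.
    by rewrite -cE permKV /= ho' /= cond.
  case: eqP => [h0|]; last by [].
  have xo : (x p).1 = o by apply: val_inj; rewrite /= h0.
  case e: (x p).2.
  - exfalso; move/eqP: pd; apply; rewrite -cE.
    have xpE : x p = (o, true) by rewrite -xo -e; case: (x p).
    by rewrite -xpE permK.
  - have xpE : x p = (o, false) by rewrite -xo -e; case: (x p).
    have pdd : p = d by rewrite /d -xpE permK.
    by rewrite pdd cond.
have N3 : negpt d \notin Nset x by rewrite inE -cE permKV /= andbF.
rewrite /L EN E1 !cardsU1 N1 N3 /=; rewrite /f; lia.
Qed.

End L.

End MC.
Import MC.
Module MD.
Import MA.
Import MB.
Import MC.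
Set Implicit Arguments. Unset Strict Implicit. Unset Printing Implicit Defensive.
Local Open Scope group_scope.

Section D.
Variable n : nat.
Implicit Types (p q : pt n) (x y : {perm pt n}).

Lemma tgen_inv : 0 < n -> tgen n * tgen n = 1.
Proof.
move=> n0; apply/permP => p; rewrite permM perm1 !tgenE //.
case: p => i e /=; case: (eqVneq (val i) 0) => h /=; rewrite /negpt /= ?h ?eqxx /= ?negbK //; by rewrite (negbTE h).
Qed.

Lemma tgen_equiv : 0 < n -> nequiv (tgen n).
Proof.
move=> n0 p; rewrite !tgenE //; case: p => i e /=; case: (eqVneq (val i) 0) => h //=; by rewrite ?h ?(negbTE h).
Qed.

Lemma sgen_inv k (a b : 'I_n) : val a = k.-1 -> val b = k -> 0 < k ->
  sgen n k * sgen n k = 1.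
Proof.
move=> ha hb k0; apply/permP => p; rewrite permM perm1 !(sgenE _ ha hb k0).
have ab : a != b by apply/eqP => /(congr1 val); rewrite ha hb; lia.
case: p => i e /=; case: (eqVneq i a) => [->|ia] /=.
  by rewrite eq_sym (negbTE ab) eqxx.
case: (eqVneq i b) => [->|ib] /=; first by rewrite eqxx.
by rewrite (negbTE ia) (negbTE ib).
Qed.

Lemma sgen_equiv k (a b : 'I_n) : val a = k.-1 -> val b = k -> 0 < k ->
  nequiv (sgen n k).
Proof.
move=> ha hb k0 p; rewrite !(sgenE _ ha hb k0); case: p => i e /=.
by case: ifP => //; case: ifP.
Qed.

Lemma nequivM x y : nequiv x -> nequiv y -> nequiv (x * y).
Proof. by move=> ex ey p; rewrite !permM ex ey. Qed.

Lemma Lt' x (o : 'I_n) : val o = 0 -> nequiv x -> (x^-1 (o, false)).2 = true ->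
  (L (x * tgen n)).+2 = L x.
Proof.
move=> ho ex cond.
have n0 : 0 < n by rewrite -ho ltn_ord.
have ey : nequiv (x * tgen n) by apply: nequivM => //; apply: tgen_equiv.
rewrite -(Lt ho ey); first by rewrite -mulgA tgen_inv // mulg1.
have tV : (tgen n)^-1 = tgen n by apply/eqP; rewrite eq_invg_mul tgen_inv.
rewrite invgM tV permM tgenE //= ho /=.
idtac.
by rewrite (nequivV ex) /= cond.
Qed.

Lemma Ls' x k (a b : 'I_n) : val a = k.-1 -> val b = k -> 0 < k -> nequiv x ->
  ~~ (key (x^-1 (a, false)) < key (x^-1 (b, false))) ->
  (L (x * sgen n k)).+2 = L x.
Proof.
move=> ha hb k0 ex cond.
have ey : nequiv (x * sgen n k) by apply: nequivM => //; apply: (sgen_equiv ha hb).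
have ab : a != b by apply/eqP => /(congr1 val); rewrite ha hb; lia.
have sV : (sgen n k)^-1 = sgen n k by apply/eqP; rewrite eq_invg_mul (sgen_inv ha hb).
rewrite -(Ls ha hb k0 ey); first by rewrite -mulgA (sgen_inv ha hb) // mulg1.
rewrite invgM sV !permM !(sgenE _ ha hb k0) /= eqxx eq_sym (negbTE ab) eqxx.
rewrite ltn_neqAle leqNgt cond andbT; apply/negP => /eqP/key_inj/perm_inj [].
by apply/eqP; rewrite eq_sym.
Qed.

End D.

End MD.
Import MD.
Module ME.
Import MA.
Import MB.
Import MC.
Import MD.
Set Implicit Arguments. Unset Strict Implicit. Unset Printing Implicit Defensive.
Local Open Scope group_scope.

Section E.
Variable n : nat.
Implicit Types (p q : pt n) (x y : {perm pt n}).

Definition Eset := [set x : {perm pt n} | [forall p, x (negpt p) == negpt (x p)]].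

Lemma Eset_group : group_set Eset.
Proof.
apply/group_setP; split; first by rewrite inE; apply/forallP => p; rewrite !perm1.
move=> x y; rewrite !inE => /forallP hx /forallP hy; apply/forallP => p.
by rewrite !permM (eqP (hx p)) (eqP (hy (x p))).
Qed.

Canonical EG := Group Eset_group.

Lemma gen_spec (i : 'I_n) :
  (val i = 0 /\ gen i = tgen n) \/
  (exists a : 'I_n, val a = (val i).-1 /\ 0 < val i /\ gen i = sgen n i).
Proof.
rewrite /gen; case: eqP => h0; [by left | right].
have ha : (val i).-1 < n by apply: leq_ltn_trans (leq_pred _) (ltn_ord i).
by exists (Ordinal ha); split => //; split => //; lia.
Qed.

Lemma gen_equiv (i : 'I_n) : nequiv (gen i).
Proof.
have n0 : 0 < n by apply: leq_ltn_trans (ltn_ord i).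
case: (gen_spec i) => [[_ ->]|[a [ha [i0 ->]]]]; first exact: tgen_equiv.
exact: (sgen_equiv ha).
Qed.

Lemma gen_inv (i : 'I_n) : gen i * gen i = 1.
Proof.
have n0 : 0 < n by apply: leq_ltn_trans (ltn_ord i).
case: (gen_spec i) => [[_ ->]|[a [ha [i0 ->]]]]; first exact: tgen_inv.
exact: (sgen_inv ha).
Qed.

Lemma gen_W (i : 'I_n) : gen i \in W n.
Proof. by apply: mem_gen; apply: imset_f. Qed.

Lemma W_equiv x : x \in W n -> nequiv x.
Proof.
have : W n \subset EG.
  rewrite gen_subG; apply/subsetP => g /imsetP[i _ ->]; rewrite inE.
  by apply/forallP => p; apply/eqP; apply: gen_equiv.
move/subsetP => sub /sub; rewrite inE => /forallP h p; exact/eqP.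
Qed.

Lemma gen_step x (i : 'I_n) : nequiv x ->
  L (x * gen i) = (L x).+2 \/ (L (x * gen i)).+2 = L x.
Proof.
move=> ex.
case: (gen_spec i) => [[h0 ->]|[a [ha [i0 ->]]]].
  case e: (x^-1 (i, false)).2; [right; exact: (Lt' h0 ex e) | left; exact: (Lt h0 ex e)].
case e: (key (x^-1 (a, false)) < key (x^-1 (i, false))).
  by left; apply: (Ls ha).
by right; apply: (Ls' ha) => //; rewrite e.
Qed.

End E.

End ME.
Import ME.
Module MF.
Import MA.
Import MB.
Import MC.
Import MD.
Import ME.
Set Implicit Arguments. Unset Strict Implicit. Unset Printing Implicit Defensive.
Local Open Scope group_scope.

Lemma asc_core : forall n (y : {perm pt n}), nequiv y ->
  (forall o : 'I_n, val o = 0 -> (y ((o, false) : pt n)).2 = false) ->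
  (forall a b : 'I_n, val b = (val a).+1 -> key (y ((a, false) : pt n)) < key (y ((b, false) : pt n))) ->
  y = 1.
Proof.
move=> n y ey ht hs; move: y ey ht hs; case: n => [|m] y ey ht hs.
  by apply/permP => -[[i hi] e].
set h := fun i => key (y (inord i, false)).
have step : forall i, i < m -> h i < h i.+1.
  move=> i im; apply: hs; rewrite /= !inordK //; lia.
have up : forall i, i <= m -> m.+1 + i <= h i.
  elim=> [|i IH] im.
    rewrite /h; have := ht (inord 0) (inordK _); rewrite /key => -> //; lia.
  have := step i im; have := IH (ltnW im); lia.
have down : forall j, j <= m -> h (m - j) <= m.+1 + (m - j).
  elim=> [|j IH] jm.
    rewrite subn0 /h; have := key_lt (y (inord m, false)); lia.
  have := step (m - j.+1); have := IH (ltnW jm).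
  have -> : (m - j.+1).+1 = m - j by lia.
  lia.
have hE : forall i : 'I_m.+1, y (i, false) = (i, false).
  move=> i; apply: key_inj; have := up i (ltn_ord i); have := down (m - i) (leq_subr _ _).
  have -> : m - (m - i) = i by have := ltn_ord i; lia.
  rewrite /h inord_val /key /=; lia.
apply/permP => -[i e]; rewrite perm1; case: e; last exact: hE.
have -> : ((i, true) : pt m.+1) = negpt (i, false) by [].
by rewrite ey hE.
Qed.


Section F.
Variable n : nat.
Implicit Types (p q : pt n) (x y : {perm pt n}).

Lemma asc_id x : nequiv x ->
  (forall o : 'I_n, val o = 0 -> (x^-1 (o, false)).2 = false) ->
  (forall a b : 'I_n, val b = (val a).+1 -> key (x^-1 (a, false)) < key (x^-1 (b, false))) ->
  x = 1.
Proof.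
move=> ex ht hs; suff yE : x^-1 = 1 by rewrite -[x]invgK yE invg1.
exact: asc_core (nequivV ex) ht hs.
Qed.


Lemma L1 : L (1 : {perm pt n}) = 0.
Proof.
rewrite /L; apply/eqP; rewrite addn_eq0 !cards_eq0; apply/andP; split; apply/eqP/setP.
- by move=> [a b]; rewrite !inE !perm1 /=; apply/negP => /andP[]; lia.
- by move=> a; rewrite !inE perm1 andbN.
Qed.

End F.

End MF.
Import MF.
Module MG.
Import MA.
Import MB.
Import MC.
Import MD.
Import ME.
Import MF.
Set Implicit Arguments. Unset Strict Implicit. Unset Printing Implicit Defensive.
Local Open Scope group_scope.

Section G.
Variable n : nat.
Implicit Types (p q : pt n) (x y : {perm pt n}).

Lemma prod_rcons (s : seq 'I_n) i :
  \prod_(j <- rcons s i) gen j = (\prod_(j <- s) gen j) * gen i.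
Proof. by rewrite -cats1 big_cat big_seq1. Qed.

Lemma prod_W (s : seq 'I_n) : \prod_(j <- s) gen j \in W n.
Proof.
elim/last_ind: s => [|s i IH]; first by rewrite big_nil group1.
by rewrite prod_rcons groupM // gen_W.
Qed.

Lemma word_L (s : seq 'I_n) : L (\prod_(j <- s) gen j) <= (2 * size s)%N.
Proof.
elim/last_ind: s => [|s i IH]; first by rewrite big_nil L1.
rewrite prod_rcons size_rcons.
by move: IH; case: (gen_step i (W_equiv (prod_W s))) => [->|<-]; set z := L _; move=> H; clearbody z; clear -H; lia.
Qed.

Lemma desc_ex x : x \in W n -> x != 1 -> exists i : 'I_n, (L (x * gen i)).+2 = L x.
Proof.
move=> xW x1.
have [/existsP[i /eqP hi]|nd] := boolP [exists i : 'I_n, (L (x * gen i)).+2 == L x].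
  by exists i.
exfalso; move/eqP: x1; apply; apply: asc_id (W_equiv xW) _ _.
- move=> o ho; apply/negP => he; move/existsP: nd; apply; exists o; apply/eqP.
  rewrite /gen ho eqxx; exact: Lt' ho (W_equiv xW) he.
- move=> a b hb; rewrite ltnNge leq_eqVlt negb_or; apply/andP; split.
    apply/negP => /eqP /key_inj /perm_inj [] /(congr1 val); rewrite hb; case: (a) => m hm /= h; clear -h; lia.
  apply/negP => he; move/existsP: nd; apply; exists b; apply/eqP.
  have b0 : val b != 0 by rewrite hb.
  have ha : val a = (val b).-1 by rewrite hb.
  have b0' : 0 < val b by rewrite hb.
  rewrite /gen (negbTE b0).
  apply: (Ls' ha erefl b0' (W_equiv xW)).
  by rewrite -leqNgt ltnW.
Qed.

Lemma word_ex N x : x \in W n -> L x <= N ->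
  exists s : seq 'I_n, \prod_(j <- s) gen j = x /\ (2 * size s)%N = L x.
Proof.
elim: N x => [|N IH] x xW hL; have [x1|x1] := eqVneq x 1;
  try by exists [::]; rewrite big_nil x1 L1.
  have [i hi] := desc_ex xW x1; move: hL; rewrite -hi; lia.
have [i hi] := desc_ex xW x1.
have [s [hs hs2]] := IH (x * gen i) (groupM xW (gen_W i)) ltac:(move: hL; rewrite -hi; clear; lia).
exists (rcons s i); rewrite prod_rcons hs -mulgA gen_inv mulg1 size_rcons; split => //.
move: hs2; rewrite -hi; clear; lia.
Qed.

End G.

End MG.
Import MG.
Module MH.
Import MA.
Import MB.
Import MC.
Import MD.
Import ME.
Import MF.
Import MG.
Set Implicit Arguments. Unset Strict Implicit. Unset Printing Implicit Defensive.
Local Open Scope group_scope.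

Lemma fact_bound m : 3 <= m -> (m * m + m <= 2 * m`!)%N.
Proof.
elim: m => [|m IH] //; case: (ltnP m 3) => hm.
  by move=> h; have -> : m = 2 by lia.
move=> _; have := IH hm; rewrite factS; nia.
Qed.

Section H.
Variable n : nat.
Implicit Types (p q : pt n) (x y : {perm pt n}).

Lemma perm_card : (#|{: pt n}|`! <= #|{perm pt n}|)%N.
Proof. by rewrite -cardsT -card_perm max_card. Qed.

Lemma L_le x : (L x <= #|{: pt n}| * #|{: pt n}| + #|{: pt n}|)%N.
Proof. by rewrite /L leq_add // -?card_prod max_card. Qed.

Lemma card_pt : #|{: pt n}| = (n * 2)%N.
Proof. by rewrite card_prod card_ord card_bool. Qed.

Lemma ellE x : 1 < n -> x \in W n -> (2 * ell x)%N = L x.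
Proof.
move=> n1 xW.
have [s [hs hs2]] := word_ex xW (leqnn (L x)).
set w := size s in hs2.
have ww : word_of_length w x by apply/existsP; exists (in_tuple s); rewrite /= hs.
have wb : w < #|{perm pt n}|.+1.
  have := L_le x; have := perm_card; have := fact_bound (m := #|{: pt n}|).
  rewrite card_pt => fb pc Lb; have := fb ltac:(lia); move: pc Lb hs2.
  clear; lia.
set P := fun m => word_of_length m x.
have hasP : has P (iota 0 #|{perm pt n}|.+1) by apply/hasP; exists w; rewrite // mem_iota.
have fl := has_find P (iota 0 #|{perm pt n}|.+1); rewrite hasP size_iota in fl.
have Pell : word_of_length (ell x) x.
  have := nth_find 0 hasP; rewrite nth_iota //.
have Lle : (L x <= 2 * ell x)%N.
  move/existsP: Pell => [t /eqP ht]; rewrite -{1}ht.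
  by have := word_L t; rewrite size_tuple.
have ellw : (ell x <= w)%N.
  rewrite leqNgt; apply/negP => hw.
  have := before_find 0 hw; rewrite nth_iota; last exact: wb.
  by rewrite /P ww.
move: Lle ellw hs2; clear; lia.
Qed.

End H.

End MH.
Import MH.

Lemma desc_iff n k (a b : 'I_n) (y : {perm pt n}) :
  val a = k.-1 -> val b = k -> 0 < k -> 1 < n -> y \in W n ->
  (ell (y * sgen n k)%g > ell y <-> key (y^-1%g (a, false)) < key (y^-1%g (b, false))).
Proof.
move=> ha hb k0 n1 yW.
have ey := W_equiv yW.
have ysW : (y * sgen n k)%g \in W n.
  have -> : sgen n k = gen b.
    rewrite /gen; have -> : (val b == 0) = false by rewrite hb; apply/eqP; lia.
    by rewrite -hb.
  by rewrite groupM // gen_W.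
have E1 := ellE n1 yW; have E2 := ellE n1 ysW.
case c: (key (y^-1%g (a, false)) < key (y^-1%g (b, false))).
  have := Ls ha hb k0 ey c; move: E1 E2; clear; split => //; lia.
have := Ls' ha hb k0 ey (negbT c); move: E1 E2; clear; split => //; lia.
Qed.

Theorem proposition2p12 (n : nat) (x : {perm pt n}) (k : nat) :
  x \in W n -> 1 <= k <= n - 1 ->
  (ell (x * sgen n k)%g > ell x <-> ell (tgen n * x * sgen n k)%g > ell (tgen n * x)%g).
Proof.
move=> xW /andP[k1 kn].
have n1 : 1 < n by lia.
have n0 : 0 < n by lia.
have hka : k.-1 < n by lia.
have hkb : k < n by lia.
pose a : 'I_n := Ordinal hka. pose b : 'I_n := Ordinal hkb.
have o0 : 0 < n by [].
pose o : 'I_n := Ordinal o0.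
have tW : tgen n \in W n.
  have -> : tgen n = gen o by rewrite /gen eqxx.
  exact: gen_W.
have txW : (tgen n * x)%g \in W n by rewrite groupM.
rewrite (@desc_iff n k a b x erefl erefl k1 n1 xW).
rewrite (@desc_iff n k a b _ erefl erefl k1 n1 txW).
have tV : (tgen n)^-1%g = tgen n by apply/eqP; rewrite eq_invg_mul tgen_inv.
rewrite invgM tV !permM !keyt //.
set c := x^-1%g (a, false); set d := x^-1%g (b, false).
have ex := nequivV (W_equiv xW).
have hcd : key c != n + n - (key d).+1.
  apply/eqP; rewrite -key_neg => /key_inj.
  rewrite /d -ex /c => /perm_inj [] _ //.
rewrite sw_lt; first by [].
- move=> [h1 h2]; move: hcd n0; rewrite h1 h2; clear; lia.
- move=> [h1 h2]; move: hcd n0; rewrite h1 h2; clear; lia.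
Qed.
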